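(* Let $q=p^h$ with $p>3$ prime, let $X,T$ be positive integers, and let $\mathcal{E}$ be an elliptic curve over $\mathbb{F}_q$ with affine equation $y^2=f(x)$, $\deg f=3$; let $\gamma=\#\{z\in\mathbb{F}_q: f(z)=0\}$. Define $$\mathcal{R}^{\mathcal{X}}_{\max}=\frac{L^{\mathcal{X}}}{L^{\mathcal{X}}+X+T},\quad L^{\mathcal{X}}=\left\lfloor\frac{q-(X+T)}{2}\right\rfloor,$$ $$\mathcal{R}^{\mathcal{E}}_{\max}=\frac{L^{\mathcal{E}}}{L^{\mathcal{E}}+X+T+8},\quad L^{\mathcal{E}}=2\left\lfloor\frac{\#\mathcal{E}(\mathbb{F}_q)-(X+T+\gamma+9)}{4}\right\rfloor-1.$$ If $\#\mathcal{E}(\mathbb{F}_q)\ge q\left(1+\frac{8}{X+T}\right)+\gamma+7$, then $\mathcal{R}^{\mathcal{E}}_{\max}>\mathcal{R}^{\mathcal{X}}_{\max}$.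
   Context: $\mathcal{R}^{\mathcal{X}}_{\max}$ is the largest rate of the known XSTPIR construction from rational curves over $\mathbb{F}_q$ (which gives, whenever $2L+X+T\le q$, an $X$-secure $T$-private PIR scheme with $N=L+X+T$ servers and rate $L/N$), and $\mathcal{R}^{\mathcal{E}}_{\max}$ is the largest rate of the known construction from the elliptic curve $\mathcal{E}$ (rate $L/N$, $N=L+X+T+8$, $L$ odd, requiring $\#\mathcal{E}(\mathbb{F}_q)\ge 2L+X+T+11+\gamma$); the explicit formulas above are these maxima. *)

(* Defs.v *)
From HB Require Import structures.
From mathcomp Require Import all_boot all_order all_algebra all_field.
Set Implicit Arguments. Unset Strict Implicit. Unset Printing Implicit Defensive.
Import Order.TTheory GRing.Theory Num.Theory.
Local Open Scope ring_scope.

(* Affine model y^2 = f(x) of an elliptic curve over a finite field F: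
   f is a cubic (size 4) without repeated roots (separable). *)
Definition elliptic_cubic (F : finFieldType) (f : {poly F}) : Prop :=
  size f = 4%N /\ separable_poly f.

(* #E(F_q): affine points plus the single point at infinity. *)
Definition ell_card (F : finFieldType) (f : {poly F}) : nat :=
  (#|[set P : F * F | P.2 ^+ 2 == f.[P.1]]|).+1.

Definition gamma_roots (F : finFieldType) (f : {poly F}) : nat :=
  #|[set z : F | root f z]|.

(* L^X = floor((q - (X+T))/2)  (intdiv %/ with positive divisor is floor) *)
Definition LX (q X T : nat) : int := ((q%:Z - (X + T)%:Z) %/ 2)%Z.

Definition LE (N X T g : nat) : int :=
  2 * ((N%:Z - (X + T + g + 9)%:Z) %/ 4)%Z - 1.

Definition RX (q X T : nat) : rat :=
  (LX q X T)%:~R / ((LX q X T)%:~R + (X + T)%:R).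

Definition RE (N X T g : nat) : rat :=
  (LE N X T g)%:~R / ((LE N X T g)%:~R + (X + T + 8)%:R).

(* Main.v *)
Require Import Defs.
From HB Require Import structures.
From mathcomp Require Import all_boot all_order all_algebra all_field.
From mathcomp Require Import zify ring lra.
Import Order.TTheory GRing.Theory Num.Theory.
Local Open Scope ring_scope.
Lemma key (n q s g k j : rat) : 0 < s -> 0 <= q -> 0 <= g -> 2 <= s ->
  n - s - g - 9 <= 4*k + 3 -> 2*j <= q - s -> q - s <= 2*j+1 ->
  n >= q * (1 + 8 / s) + g + 7 ->
  j / (j + s) < (2*k-1) / ((2*k-1) + (s+8)).
Proof.
move=> s0 q0 g0 s2 hk hj1 hj2 hn.
have r0 : 0 <= 8 / s by rewrite divr_ge0 // ltW.
have rs : 8 / s * s = 8 by rewrite mulfVK // gt_eqF.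
set r := 8 / s in r0 rs hn.
have d1 : 0 < j + s by lra.
have hq : 0 <= q * r by rewrite mulr_ge0.
have d2 : 0 < 2*k-1 + (s+8) by lra.
rewrite ltr_pdivrMr // mulrAC ltr_pdivlMr //.
have e1 : 0 <= (4*k + 3 - (n - s - g - 9)) * s by rewrite mulr_ge0 // ?subr_ge0 // ltW.
have e2 : 0 <= (q - s - 2*j) * (s + 8) by rewrite mulr_ge0 // ?subr_ge0; lra.
have e3 : 0 <= (n - (q * (1 + r) + g + 7)) * s by rewrite mulr_ge0 // ?subr_ge0 // ltW.
have e4 : q * r * s = 8 * q by rewrite -mulrA rs mulrC.
nra.
Qed.
Lemma flo (m : int) (d : nat) : (0 < d)%N ->
  ((m %/ d)%Z * d <= m /\ m <= (m %/ d)%Z * d + d - 1)%R.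
Proof.
move=> d0; have dn : (d%:Z != 0) by rewrite eqz_nat -lt0n.
have h1 := modz_ge0 m dn. have h2 := ltz_mod m dn.
rewrite [in X in X /\ _](divz_eq m d) [in X in _ /\ X](divz_eq m d).
split; first by lia.
move: h2 => /=; lia.
Qed.
Theorem proposition4p2 (F : finFieldType) (p : nat) (f : {poly F}) (X T : nat) :
  prime p -> (3 < p)%N -> p \in [pchar F] ->
  (0 < X)%N -> (0 < T)%N ->
  elliptic_cubic f ->
  (ell_card f)%:R >= (#|F|)%:R * (1 + 8%:R / (X + T)%:R) + (gamma_roots f)%:R + 7%:R
    :> rat ->
  RE (ell_card f) X T (gamma_roots f) > RX #|F| X T.
Proof.
move=> _ _ _ X0 T0 _ hn.
rewrite /RE /RX /LE /LX.
set N := ell_card f in hn *; set g := gamma_roots f in hn *; set q := #|F| in hn *.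
have [k1 k2] := @flo (N%:Z - (X + T + g + 9)%:Z) 4 isT.
have [j1 j2] := @flo (q%:Z - (X + T)%:Z) 2 isT.
set K := ((_ %/ 4)%Z) in k1 k2 *; set J := ((_ %/ 2)%Z) in j1 j2 *.
have c1 : N%:R - (X+T)%:R - g%:R - 9 <= 4 * (K%:~R : rat) + 3.
  have := k2; rewrite -(ler_int rat) => h; apply: le_trans (le_trans h _); rewrite ?natrD; lra.
have c2 : 2 * (J%:~R : rat) <= q%:R - (X+T)%:R.
  have := j1; rewrite -(ler_int rat) => h; apply: le_trans (le_trans h _); rewrite ?natrD; lra.
have c3 : q%:R - (X+T)%:R <= 2 * (J%:~R : rat) + 1.
  have := j2; rewrite -(ler_int rat) => h; apply: le_trans (le_trans h _); rewrite ?natrD; lra.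
have -> : ((2 * K - 1)%:~R : rat) = 2 * K%:~R - 1 by rewrite intrB intrM.
have -> : ((X+T+8)%:R : rat) = (X+T)%:R + 8 by rewrite natrD.
apply: (@key N%:R q%:R (X+T)%:R g%:R) => //; rewrite ?ltr0n ?ler0n ?ler_nat //; try lia.
Qed.
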